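(* Let $T$, $\mathcal{S}=\mathcal{S}_+\cup\mathcal{S}_-$, $\Psi$, $U$, $\mu$, $P_\mu$ and $V_\mu$ be as in the context. Consider the following three discrete-time QBDs on phase space $\mathcal{S}$: (i) the QBD with blocks $\Theta_{-1}=\begin{bmatrix}0&\frac12P_{\mu+-}\\0&P_{\mu--}\end{bmatrix}$, $\Theta_0=\begin{bmatrix}\frac12P_{\mu++}&0\\P_{\mu-+}&0\end{bmatrix}$, $\Theta_1=\frac12\begin{bmatrix}I&0\\0&0\end{bmatrix}$; (ii) the QBD with blocks $B'_{-1}=\frac12\begin{bmatrix}0&P_{\mu+-}\\0&P_{\mu--}\end{bmatrix}$, $B'_0=\frac12\begin{bmatrix}P_{\mu++}&0\\P_{\mu-+}&I\end{bmatrix}$, $B'_1=\frac12\begin{bmatrix}I&0\\0&0\end{bmatrix}$; (iii) the QBD with blocks $B_{-1}=\begin{bmatrix}0&(I-\mu^{-1}T_{++})^{-1}P_{\mu+-}\\0&V_\mu\end{bmatrix}$, $B_0=0$, $B_1=\begin{bmatrix}(I-\mu^{-1}T_{++})^{-1}&0\\0&0\end{bmatrix}$. Then the QBD in (ii) has the same $\mathcal{G}$-matrix as the QBD in (i) and the same $\mathcal{G}$-matrix as the QBD in (iii).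
   Context: $T$ is the generator of a continuous-time Markov chain on a finite set $\mathcal{S}=\mathcal{S}_+\cup\mathcal{S}_-$ (disjoint, both nonempty), partitioned into blocks $T_{++},T_{+-},T_{-+},T_{--}$ according to $\mathcal{S}_\pm$. $\Psi$ is the minimal nonnegative solution of $T_{+-}+\Psi T_{--}+T_{++}\Psi+\Psi T_{-+}\Psi=0$ (the first-return probability matrix of the unit-rate fluid queue with phase generator $T$, rates $+1$ on $\mathcal{S}_+$ and $-1$ on $\mathcal{S}_-$), and $U:=T_{--}+T_{-+}\Psi$. $\mu>0$ satisfies $\mu\ge\max_i|T_{ii}|$; $P_\mu:=I+\mu^{-1}T$ with blocks $P_{\mu++}$ etc., and $V_\mu:=I+\mu^{-1}U$. A discrete-time quasi-birth-death process (QBD) with transition blocks $L_{-1},L_0,L_1$ is a Markov chain $\{(Y_n,\kappa_n)\}$ on $\mathbb{Z}\times\mathcal{S}$ with $\mathbb{P}[Y_n=k+d,\kappa_n=j\mid Y_{n-1}=k,\kappa_{n-1}=i]=(L_d)_{ij}$ for $d\in\{-1,0,1\}$. Its $\mathcal{G}$-matrix has entries $\mathcal{G}_{ij}=\mathbb{P}[\theta<\infty,\kappa_\theta=j\mid Y_0=k,\kappa_0=i]$ with $\theta=\inf\{n>0:Y_n=k-1\}$. Matrices are partitioned into blocks according to $\mathcal{S}_+,\mathcal{S}_-$. *)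

(* Defs.v *)
From HB Require Import structures.
From mathcomp Require Import all_boot all_order all_algebra.
From mathcomp Require Import all_classical all_reals all_analysis.
Set Implicit Arguments. Unset Strict Implicit. Unset Printing Implicit Defensive.
Import Order.TTheory GRing.Theory Num.Theory.
Local Open Scope ring_scope.

(* Phase space S = 'I_(p + m); S_+ = first p indices, S_- = last m indices.
   Blocks ++, +-, -+, -- are ulsubmx, ursubmx, dlsubmx, drsubmx. *)

Definition is_generator (R : realType) (n : nat) (T : 'M[R]_n) : Prop :=
  (forall i j, i != j -> 0 <= T i j) /\ (forall i, \sum_j T i j = 0).

Definition riccati (R : realType) (p m : nat) (T : 'M[R]_(p + m))
    (X : 'M[R]_(p, m)) : Prop :=
  ursubmx T + X *m drsubmx T + ulsubmx T *m X + X *m dlsubmx T *m X = 0.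

Definition nonneg_mx (R : realType) (a b : nat) (X : 'M[R]_(a, b)) : Prop :=
  forall i j, 0 <= X i j.

Definition is_min_nonneg_sol (R : realType) (p m : nat) (T : 'M[R]_(p + m))
    (Psi : 'M[R]_(p, m)) : Prop :=
  [/\ nonneg_mx Psi, riccati T Psi &
      forall X : 'M[R]_(p, m), nonneg_mx X -> riccati T X ->
        forall i j, Psi i j <= X i j].

(* Taboo transition matrices of a discrete-time QBD with blocks Lm = L_{-1},
   L0 = L_0, Lp = L_1: (taboo k l) i j is the probability, starting from
   (level y, phase i), to be at (level y + l, phase j) at time k without
   having visited level y - 1 at any of the times 1..k. *)
Fixpoint taboo (R : realType) (n : nat) (Lm L0 Lp : 'M[R]_n) (k : nat)
    : nat -> 'M[R]_n :=
  match k with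
  | 0 => fun l => if l == 0%N then 1%:M else 0
  | k'.+1 => fun l =>
      (if l is l'.+1 then taboo Lm L0 Lp k' l' *m Lp else 0)
      + taboo Lm L0 Lp k' l *m L0 + taboo Lm L0 Lp k' l.+1 *m Lm
  end.

(* The G-matrix: G i j = P[theta < oo, kappa_theta = j | Y_0 = y, kappa_0 = i],
   theta = first time n > 0 with Y_n = y - 1; i.e. the sum over k >= 0 of the
   probabilities that theta = k + 1 and kappa_theta = j. *)
Definition Gmatrix (R : realType) (n : nat) (Lm L0 Lp : 'M[R]_n) : 'M[R]_n :=
  \matrix_(i, j)
    limn (fun N : nat => \sum_(k < N) (taboo Lm L0 Lp k 0 *m Lm) i j).

Section Blocks.
Variables (R : realType) (p m : nat) (T : 'M[R]_(p + m)) (Psi : 'M[R]_(p, m))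
  (mu : R).

Definition Pmu : 'M[R]_(p + m) := 1%:M + mu^-1 *: T.
Definition Umx : 'M[R]_m := drsubmx T + dlsubmx T *m Psi.
Definition Vmu : 'M[R]_m := 1%:M + mu^-1 *: Umx.
Definition Minv : 'M[R]_p := invmx (1%:M - mu^-1 *: ulsubmx T).

Definition Theta_m1 : 'M[R]_(p + m) :=
  block_mx 0 (2^-1 *: ursubmx Pmu) 0 (drsubmx Pmu).
Definition Theta_0 : 'M[R]_(p + m) :=
  block_mx (2^-1 *: ulsubmx Pmu) 0 (dlsubmx Pmu) 0.
Definition Theta_1 : 'M[R]_(p + m) :=
  2^-1 *: block_mx 1%:M 0 0 0.

Definition Bp_m1 : 'M[R]_(p + m) :=
  2^-1 *: block_mx 0 (ursubmx Pmu) 0 (drsubmx Pmu).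
Definition Bp_0 : 'M[R]_(p + m) :=
  2^-1 *: block_mx (ulsubmx Pmu) 0 (dlsubmx Pmu) 1%:M.
Definition Bp_1 : 'M[R]_(p + m) :=
  2^-1 *: block_mx 1%:M 0 0 0.

Definition B_m1 : 'M[R]_(p + m) :=
  block_mx 0 (Minv *m ursubmx Pmu) 0 Vmu.
Definition B_0 : 'M[R]_(p + m) := 0.
Definition B_1 : 'M[R]_(p + m) :=
  block_mx Minv 0 0 0.
End Blocks.

(* Main.v *)
Require Import Defs.
From HB Require Import structures.
From mathcomp Require Import all_boot all_order all_algebra.
From mathcomp Require Import all_classical all_reals all_analysis.
From mathcomp.algebra_tactics Require Import ring lra.
From mathcomp Require Import zify.
Import Order.TTheory GRing.Theory Num.Theory.
Import numFieldNormedType.Exports.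
Local Open Scope classical_set_scope.
Local Open Scope ring_scope.
Set Implicit Arguments. Unset Strict Implicit. Unset Printing Implicit Defensive.

Section QBD.
Variables (R : realType) (n : nat) (Lm L0 Lp : 'M[R]_n).

Fixpoint W (a k : nat) : nat -> 'M[R]_n :=
  match k with
  | 0 => fun l => if l == a then 1%:M else 0
  | k'.+1 => fun l =>
      (if l is l'.+1 then W a k' l' *m Lp else 0)
      + W a k' l *m L0 + W a k' l.+1 *m Lm
  end.

Lemma taboo_W k l : taboo Lm L0 Lp k l = W 0 k l.
Proof. by elim: k l => [|k IH] [|l] //=; rewrite !IH. Qed.

Lemma W_S a k b : W a k.+1 b =
      (if b is l'.+1 then W a k l' *m Lp else 0)
      + W a k b *m L0 + W a k b.+1 *m Lm.
Proof. by []. Qed.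

Lemma ifmxl (c : bool) (A : 'M[R]_n) : (if c then 1%:M else 0) *m A = if c then A else 0.
Proof. by case: c; rewrite ?mul1mx ?mul0mx. Qed.
Lemma ifmxr (c : bool) (A : 'M[R]_n) : A *m (if c then 1%:M else 0) = if c then A else 0.
Proof. by case: c; rewrite ?mulmx1 ?mulmx0. Qed.

Lemma W_S0 a k : W a k.+1 0 = 0 + W a k 0 *m L0 + W a k 1 *m Lm.
Proof. by []. Qed.
Lemma W_SS a k b : W a k.+1 b.+1 = W a k b *m Lp + W a k b.+1 *m L0 + W a k b.+2 *m Lm.
Proof. by []. Qed.

Ltac mxring := rewrite ?mulmxDl ?mulmxDr ?mulmxA ?mul0mx ?mulmx0;
  apply/matrixP => i j; rewrite !mxE; ring.

Lemma W_left a k b : W a k.+1 b =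
  Lp *m W a.+1 k b + L0 *m W a k b + (if a is a'.+1 then Lm *m W a' k b else 0).
Proof.
elim: k a b => [|k IH] a b.
{ rewrite /= !ifmxl !ifmxr; case: a => [|a]; case: b => [|b] /=; rewrite ?eqSS ?add0r ?addr0 ?mulmx0.
  all: repeat (case: eqP => [?|?]; subst => //=; rewrite ?eqxx ?add0r ?addr0 //).
  all: by rewrite ?mul1mx ?mulmx1 ?mul0mx ?mulmx0 ?addr0 ?add0r. }
case: b => [|b]; [rewrite W_S0 | rewrite W_SS]; rewrite ![in X in X = _]IH;
  case: a => [|a]; rewrite ?W_S0 ?W_SS; mxring.
Qed.

Definition F a k := W a k 0 *m Lm.

Lemma F_rec a k : F a k.+1 =
  Lp *m F a.+1 k + L0 *m F a k + (if a is a'.+1 then Lm *m F a' k else 0).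
Proof. by rewrite /F W_left; case: a => [|a]; rewrite !mulmxDl !mulmxA ?mul0mx. Qed.

Lemma F_0 a : F a 0 = if a is 0 then Lm else 0.
Proof. by case: a => [|a]; rewrite /F /= ?mul1mx ?mul0mx. Qed.

Lemma sum_mulA k (A : 'M[R]_n) (X Y : 'I_k -> 'M[R]_n) :
  \sum_(i < k) (A *m X i) *m Y i = A *m \sum_(i < k) X i *m Y i.
Proof. by rewrite mulmx_sumr; apply: eq_bigr => *; rewrite mulmxA. Qed.
Lemma sum_mul0 k (X : 'I_k -> 'M[R]_n) : \sum_(i < k) (0 : 'M[R]_n) *m X i = 0.
Proof. by rewrite big1 // => *; rewrite mul0mx. Qed.

Lemma F_conc k a : F a.+1 k = \sum_(i < k) F a i *m F 0 (k - i.+1).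
Proof.
elim: k a => [|k IH] a; first by rewrite big_ord0 F_0.
rewrite big_ord_recl /= subn1 /=.
under eq_bigr => i _ do rewrite /bump /= subSS F_rec !mulmxDl.
rewrite !big_split /= F_rec.
case: a => [|a]; rewrite F_0 ?sum_mul0 !sum_mulA -!IH; by mxring.
Qed.

Definition nn (a b : nat) (A : 'M[R]_(a, b)) := forall i j, 0 <= A i j.
Definition mle (a b : nat) (A B : 'M[R]_(a, b)) := forall i j, A i j <= B i j.

Lemma nn0 a b : nn (0 : 'M[R]_(a, b)). Proof. by move=> i j; rewrite mxE. Qed.
Lemma nn1 a : nn (1%:M : 'M[R]_a). Proof. by move=> i j; rewrite mxE ler0n. Qed.
Lemma nnD a b (A B : 'M[R]_(a, b)) : nn A -> nn B -> nn (A + B).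
Proof. by move=> hA hB i j; rewrite mxE addr_ge0. Qed.
Lemma nnM a b c (A : 'M[R]_(a, b)) (B : 'M[R]_(b, c)) : nn A -> nn B -> nn (A *m B).
Proof. by move=> hA hB i j; rewrite mxE sumr_ge0 // => l _; rewrite mulr_ge0. Qed.
Lemma nn_sum a b (I : finType) (A : I -> 'M[R]_(a, b)) : (forall k, nn (A k)) -> nn (\sum_k A k).
Proof. by move=> h i j; rewrite summxE sumr_ge0 // => k _; apply: h. Qed.

Lemma mle_refl a b (A : 'M[R]_(a, b)) : mle A A. Proof. by []. Qed.
Lemma mle_trans a b (A B C : 'M[R]_(a, b)) : mle A B -> mle B C -> mle A C.
Proof. by move=> h1 h2 i j; apply: le_trans (h1 i j) (h2 i j). Qed.
Lemma mleD a b (A B C D : 'M[R]_(a, b)) : mle A B -> mle C D -> mle (A + C) (B + D).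
Proof. by move=> h1 h2 i j; rewrite !mxE lerD. Qed.
Lemma mleMl a b c (A : 'M[R]_(a, b)) (B C : 'M[R]_(b, c)) : nn A -> mle B C -> mle (A *m B) (A *m C).
Proof. by move=> hA h i j; rewrite !mxE ler_sum // => l _; rewrite ler_wpM2l. Qed.
Lemma mleMr a b c (A : 'M[R]_(b, c)) (B C : 'M[R]_(a, b)) : nn A -> mle B C -> mle (B *m A) (C *m A).
Proof. by move=> hA h i j; rewrite !mxE ler_sum // => l _; rewrite ler_wpM2r. Qed.
Lemma mleMM a b c (A B : 'M[R]_(a, b)) (C D : 'M[R]_(b, c)) : nn A -> nn D -> mle A B -> mle C D -> mle (A *m C) (B *m D).
Proof. by move=> hA hD h1 h2; apply: mle_trans (mleMl hA h2) (mleMr hD h1). Qed.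
Lemma nn_mle a b (A : 'M[R]_(a, b)) : nn A = mle 0 A.
Proof. by rewrite /nn /mle; apply: propext; split => h i j; move: (h i j); rewrite mxE. Qed.

Hypotheses (nnLm : nn Lm) (nnL0 : nn L0) (nnLp : nn Lp).

Lemma nnW a k b : nn (W a k b).
Proof.
elim: k b => [|k IH] b /=; first by case: eqP => _; [exact: nn1|exact: nn0].
apply: nnD; [apply: nnD|]; try exact: nnM; case: b => [|b]; [exact: nn0| exact: nnM].
Qed.
Lemma nnF a k : nn (F a k). Proof. exact: nnM (nnW _ _ _) nnLm. Qed.

Definition S a N := \sum_(k < N) F a k.
Lemma S_rec a N : S a N.+1 = (if a is 0 then Lm else 0) + Lp *m S a.+1 N + L0 *m S a N
  + (if a is a'.+1 then Lm *m S a' N else 0).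
Proof.
rewrite /S big_ord_recl F_0.
under eq_bigr => i _ do rewrite /bump /= F_rec.
rewrite !big_split /= -!mulmx_sumr; case: a => [|a]; rewrite ?big1_eq ?addrA //.
by rewrite -mulmx_sumr.
Qed.
Lemma nnS a N : nn (S a N). Proof. by apply: nn_sum => k; apply: nnF. Qed.

Fixpoint Xp (X : 'M[R]_n) a := if a is a'.+1 then X *m Xp X a' else X.
Lemma nnXp X a : nn X -> nn (Xp X a).
Proof. by move=> h; elim: a => //= a IH; apply: nnM. Qed.

Definition Fq X := Lm + L0 *m X + Lp *m (X *m X).

Lemma S_bound X : nn X -> mle (Fq X) X -> forall N a, mle (S a N) (Xp X a).
Proof.
move=> hX hF; elim=> [|N IH] a.
  by rewrite /S big_ord0 -nn_mle; apply: nnXp.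
rewrite S_rec; case: a => [|a].
  apply: mle_trans hF; rewrite /Fq addr0 -addrA [X in _ + X]addrC addrA.
  by apply: mleD; [apply: mleD; [exact: mle_refl|]|]; apply: mleMl => //; apply: IH.
apply: (@mle_trans _ _ _ (Fq X *m Xp X a)); last by apply: mleMr => //; apply: nnXp.
rewrite add0r /Fq !mulmxDl -!mulmxA.
have -> : Lp *m S a.+2 N + L0 *m S a.+1 N + Lm *m S a N =
   Lm *m S a N + L0 *m S a.+1 N + Lp *m S a.+2 N by mxring.
by apply: mleD; [apply: mleD|]; apply: mleMl => //; apply: IH.
Qed.

End QBD.

Section Lim.
Variables (R : realType) (n : nat) (Lm L0 Lp : 'M[R]_n).
Hypotheses (nnLm : nn Lm) (nnL0 : nn L0) (nnLp : nn Lp).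
Variable X0 : 'M[R]_n.
Hypotheses (nnX0 : nn X0) (supX0 : mle (Fq Lm L0 Lp X0) X0).

Local Notation S := (S Lm L0 Lp).
Local Notation F := (F Lm L0 Lp).
Local Notation Gm := (Gmatrix Lm L0 Lp).

Lemma S_step a N : mle (S a N) (S a N.+1).
Proof. by move=> i j; rewrite /S big_ord_recr /= [X in _ <= X]mxE lerDl; apply: nnF. Qed.

Lemma S0_cvg i j : cvgn (fun N => S 0 N i j).
Proof.
apply: nondecreasing_is_cvgn.
  by apply/nondecreasing_seqP => N; apply: S_step.
exists (X0 i j) => _ [N _ <-].
exact: (S_bound nnLm nnL0 nnLp nnX0 supX0 N 0 i j).
Qed.

Lemma Gm_E i j : Gm i j = limn (fun N => S 0 N i j).
Proof.
rewrite mxE; suff -> : (fun N => \sum_(k < N) (taboo Lm L0 Lp k 0 *m Lm) i j) = (fun N => S 0 N i j) by [].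
apply: funext => N.
by rewrite /S summxE; apply: eq_bigr => k _; rewrite taboo_W.
Qed.

Lemma S_le_G N : mle (S 0 N) Gm.
Proof.
move=> i j; rewrite Gm_E; apply: (nondecreasing_cvgn_le (u_ := fun N => S 0 N i j)).
  by apply/nondecreasing_seqP => M; apply: S_step.
exact: S0_cvg.
Qed.

Lemma G_le X : (forall N, mle (S 0 N) X) -> mle Gm X.
Proof.
move=> h i j; rewrite Gm_E; apply: limr_le; first exact: S0_cvg.
by apply: nearW => N; apply: h.
Qed.


Lemma mle_sum k (A B : 'I_k -> 'M[R]_n) : (forall i, mle (A i) (B i)) ->
  mle (\sum_(i < k) A i) (\sum_(i < k) B i).
Proof. by move=> h i j; rewrite !summxE ler_sum // => l _; apply: h. Qed.

Lemma mle_widen N M (g : nat -> 'M[R]_n) : (N <= M)%N -> (forall i, nn (g i)) ->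
  mle (\sum_(i < N) g i) (\sum_(i < M) g i).
Proof.
move=> NM h i j; rewrite !summxE (big_ord_widen M (fun l => g l i j) NM) big_mkcond /=.
by apply: ler_sum => l _; case: ifP => _ //; apply: h.
Qed.

Lemma sum_tri M (f : nat -> nat -> 'M[R]_n) :
  \sum_(k < M) \sum_(i < k) f i (k - i.+1)%N = \sum_(i < M) \sum_(j < (M - i.+1)%N) f i j.
Proof.
elim: M => [|M IH]; first by rewrite !big_ord0.
rewrite big_ord_recr /= IH [RHS]big_ord_recr /= subnn big_ord0 addr0 -big_split /=.
apply: eq_bigr => i _; rewrite subSS -(subnSK (ltn_ord i)) big_ord_recr /=. by [].
Qed.

Lemma SS_le N : mle (S 0 N *m S 0 N) (S 1 (N + N)%N).
Proof.
have -> : S 0 N *m S 0 N = \sum_(i < N) \sum_(j < N) F 0 i *m F 0 j.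
  by rewrite /S mulmx_suml; apply: eq_bigr => i _; rewrite mulmx_sumr.
have -> : S 1 (N + N)%N = \sum_(i < (N + N)%N) \sum_(j < (N + N - i.+1)%N) F 0 i *m F 0 j.
  rewrite /S -(sum_tri _ (fun i j => F 0 i *m F 0 j)).
  by apply: eq_bigr => k _; rewrite F_conc.
have NN : (N <= N + N)%N by lia.
have nng : forall i, nn ((fun i => \sum_(j < (N + N - i.+1)%N) F 0 i *m F 0 j) i).
  by move=> i; apply: nn_sum => j; apply: nnM; apply: nnF.
apply: (@mle_trans _ _ _ _ (\sum_(i < N) \sum_(j < (N + N - i.+1)%N) F 0 i *m F 0 j)); last exact: (mle_widen NN nng).
apply: mle_sum => i; apply: (mle_widen (g := fun j => F 0 i *m F 0 j)); first by have := ltn_ord i; lia.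
by move=> j; apply: nnM; apply: nnF.
Qed.


Lemma cvg_mulmx a b c (A : nat -> 'M[R]_(a,b)) (B : nat -> 'M[R]_(b,c)) (A0 : 'M[R]_(a,b)) (B0 : 'M[R]_(b,c)) :
  (forall i j, (fun N => A N i j) @ \oo --> A0 i j) ->
  (forall i j, (fun N => B N i j) @ \oo --> B0 i j) ->
  forall i j, (fun N => (A N *m B N) i j) @ \oo --> (A0 *m B0) i j.
Proof.
move=> hA hB i j; rewrite mxE.
have -> : (fun N => (A N *m B N) i j) = (fun N => \sum_l A N i l * B N l j).
  by apply: funext => N; rewrite mxE.
apply: cvg_big => //; first exact: add_continuous.
by move=> l _; apply: cvgM.
Qed.

Lemma cvg_mxD a b (A B : nat -> 'M[R]_(a,b)) (A0 B0 : 'M[R]_(a,b)) :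
  (forall i j, (fun N => A N i j) @ \oo --> A0 i j) ->
  (forall i j, (fun N => B N i j) @ \oo --> B0 i j) ->
  forall i j, (fun N => (A N + B N) i j) @ \oo --> (A0 + B0) i j.
Proof.
move=> hA hB i j; rewrite mxE.
have -> : (fun N => (A N + B N) i j) = (fun N => A N i j + B N i j).
  by apply: funext => N; rewrite mxE.
exact: cvgD.
Qed.

Lemma cvg_mxC a b (A0 : 'M[R]_(a,b)) :
  forall i j, (fun N : nat => A0 i j) @ \oo --> A0 i j.
Proof. by move=> i j; apply: cvg_cst. Qed.

Lemma S_to_G i j : (fun N => S 0 N i j) @ \oo --> Gm i j.
Proof. rewrite Gm_E; exact: S0_cvg. Qed.

Lemma S_mono a N M : (N <= M)%N -> mle (S a N) (S a M).
Proof. by move=> NM; apply: (mle_widen (g := F a)) => // k; apply: nnF. Qed.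

Lemma FqS_le N : mle (Fq Lm L0 Lp (S 0 N)) (S 0 (N + N).+1).
Proof.
have -> : S 0 (N + N).+1 = Lm + L0 *m S 0 (N + N) + Lp *m S 1 (N + N).
  rewrite S_rec addr0; apply/matrixP => i j; rewrite !mxE; ring.
apply: mleD; [apply: mleD; [exact: mle_refl|]|].
  by apply: mleMl => //; apply: S_mono; lia.
by apply: mleMl => //; apply: SS_le.
Qed.

Lemma FqG : mle (Fq Lm L0 Lp Gm) Gm.
Proof.
move=> i j.
have hc : (fun N => Fq Lm L0 Lp (S 0 N) i j) @ \oo --> Fq Lm L0 Lp Gm i j.
  rewrite /Fq; apply: cvg_mxD; [apply: cvg_mxD|].
  - exact: cvg_mxC.
  - by apply: cvg_mulmx; [exact: cvg_mxC| exact: S_to_G].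
  - by apply: cvg_mulmx; [exact: cvg_mxC| apply: cvg_mulmx; exact: S_to_G].
rewrite -(cvg_lim _ hc) //; apply: limr_le; first exact: cvgP hc.
apply: nearW => N; apply: le_trans (FqS_le N i j) _.
exact: S_le_G.
Qed.

Lemma Fq_mono X Y : nn X -> nn Y -> mle X Y -> mle (Fq Lm L0 Lp X) (Fq Lm L0 Lp Y).
Proof.
move=> hX hY hXY; apply: mleD; [apply: mleD; [exact: mle_refl|]|]; apply: mleMl => //.
exact: mleMM.
Qed.

Lemma nnG : nn Gm.
Proof.
move=> i j; apply: le_trans (S_le_G 0 i j); by rewrite /S big_ord0 mxE.
Qed.

Lemma G_min X : nn X -> mle (Fq Lm L0 Lp X) X -> mle Gm X.
Proof. by move=> hX hF; apply: G_le => N; exact: (S_bound nnLm nnL0 nnLp hX hF N 0). Qed.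

Lemma nnFq X : nn X -> nn (Fq Lm L0 Lp X).
Proof. by move=> h; apply: nnD; [apply: nnD; [|apply: nnM]|apply: nnM; [|apply: nnM]]. Qed.

Lemma G_fix : Fq Lm L0 Lp Gm = Gm.
Proof.
have h : mle Gm (Fq Lm L0 Lp Gm).
  apply: G_min; first by apply: nnFq; apply: nnG.
  by apply: Fq_mono; [apply: nnFq; apply: nnG|apply: nnG|apply: FqG].
by apply/matrixP => i j; apply/le_anti; rewrite FqG h.
Qed.

End Lim.


Ltac mxnorm := rewrite ?(mulmxDl, mulmxDr, mulmxBl, mulmxBr, mulNmx, mulmxN, mul1mx, mulmx1, mul0mx, mulmx0, mulmxA,
  scalerDr, scalerBr, scaler0, addr0, add0r, =^~ scalemxAl, =^~ scalemxAr).
Ltac mxr := mxnorm; apply/matrixP => i j; rewrite !mxE; ring.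

Section Gen.
Variable R : realType.
Lemma mle_block a1 a2 b1 b2 (A A' : 'M[R]_(a1, b1)) (B B' : 'M[R]_(a1, b2))
   (C C' : 'M[R]_(a2, b1)) (D D' : 'M[R]_(a2, b2)) :
  mle A A' -> mle B B' -> mle C C' -> mle D D' ->
  mle (block_mx A B C D) (block_mx A' B' C' D').
Proof.
move=> hA hB hC hD i j.
case: (split_ordP i) => i' ->; case: (split_ordP j) => j' ->;
by rewrite ?block_mxEul ?block_mxEur ?block_mxEdl ?block_mxEdr.
Qed.

Lemma nn_block a1 a2 b1 b2 (A : 'M[R]_(a1, b1)) (B : 'M[R]_(a1, b2))
   (C : 'M[R]_(a2, b1)) (D : 'M[R]_(a2, b2)) :
  nn A -> nn B -> nn C -> nn D -> nn (block_mx A B C D).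
Proof.
move=> hA hB hC hD i j.
case: (split_ordP i) => i' ->; case: (split_ordP j) => j' ->;
by rewrite ?block_mxEul ?block_mxEur ?block_mxEdl ?block_mxEdr.
Qed.

Lemma nnZ a b (c : R) (A : 'M[R]_(a, b)) : 0 <= c -> nn A -> nn (c *: A).
Proof. by move=> hc hA i j; rewrite mxE mulr_ge0. Qed.

Lemma nn_ul a1 a2 b1 b2 (A : 'M[R]_(a1 + a2, b1 + b2)) : nn A -> nn (ulsubmx A).
Proof. by move=> h i j; rewrite !mxE; apply: h. Qed.
Lemma nn_ur a1 a2 b1 b2 (A : 'M[R]_(a1 + a2, b1 + b2)) : nn A -> nn (ursubmx A).
Proof. by move=> h i j; rewrite !mxE; apply: h. Qed.
Lemma nn_dl a1 a2 b1 b2 (A : 'M[R]_(a1 + a2, b1 + b2)) : nn A -> nn (dlsubmx A).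
Proof. by move=> h i j; rewrite !mxE; apply: h. Qed.
Lemma nn_dr a1 a2 b1 b2 (A : 'M[R]_(a1 + a2, b1 + b2)) : nn A -> nn (drsubmx A).
Proof. by move=> h i j; rewrite !mxE; apply: h. Qed.

Lemma minprin k (K : 'M[R]_k) (x : 'cV[R]_k) :
  (forall i j, i != j -> K i j <= 0) -> (forall i, 0 < \sum_j K i j) ->
  nn (K *m x) -> nn x.
Proof.
case: k K x => [|k] K x hoff hrow hKx i j; first by case: i.
have [i1 _ hmin] : exists2 i1, true & forall i, x i1 0 <= x i 0.
  by case: (@arg_minP _ _ _ ord0 xpredT (fun i => x i 0)) => // i1 _ h; exists i1 => // i2; apply: h.
rewrite (ord1 j); apply: le_trans (hmin i) ; rewrite leNgt; apply/negP => neg.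
have := hKx i1 0; rewrite mxE => h0.
have : \sum_l K i1 l * x l 0 <= (\sum_l K i1 l) * x i1 0.
  rewrite mulr_suml; apply: ler_sum => l _.
  case: (eqVneq l i1) => [->//|ne]; apply: ler_wnM2l; [apply: hoff; rewrite eq_sym|]; by [].
have : (\sum_l K i1 l) * x i1 0 < 0 by rewrite pmulr_rlt0.
lra.
Qed.
End Gen.

Section App.
Variables (R : realType) (p m : nat) (T : 'M[R]_(p + m)) (Psi : 'M[R]_(p, m)) (mu : R).
Hypotheses (hgen : is_generator T) (hPsi : is_min_nonneg_sol T Psi)
  (mu_gt0 : 0 < mu) (hmu : forall i, `|T i i| <= mu).

Local Notation P := (Pmu T mu).
Local Notation V := (Vmu T Psi mu).

Lemma PE : P = block_mx (1%:M + mu^-1 *: ulsubmx T) (mu^-1 *: ursubmx T)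
   (mu^-1 *: dlsubmx T) (1%:M + mu^-1 *: drsubmx T).
Proof.
by rewrite /Pmu -{1}[T]submxK (scalar_mx_block p m) scale_block_mx add_block_mx !add0r.
Qed.
Lemma ulP : ulsubmx P = 1%:M + mu^-1 *: ulsubmx T. Proof. by rewrite PE block_mxKul. Qed.
Lemma urP : ursubmx P = mu^-1 *: ursubmx T. Proof. by rewrite PE block_mxKur. Qed.
Lemma dlP : dlsubmx P = mu^-1 *: dlsubmx T. Proof. by rewrite PE block_mxKdl. Qed.
Lemma drP : drsubmx P = 1%:M + mu^-1 *: drsubmx T. Proof. by rewrite PE block_mxKdr. Qed.

Lemma mu_inv_gt0 : 0 < mu^-1. Proof. by rewrite invr_gt0. Qed.

Lemma nnP : nn P.
Proof.
move=> i j; rewrite /Pmu !mxE; case: (eqVneq i j) => [->|ne].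
  have : - mu <= T j j by move: (hmu j); rewrite ler_norml => /andP[].
  move=> h; have : mu^-1 * (- mu) <= mu^-1 * T j j by rewrite ler_pM2l // mu_inv_gt0.
  rewrite mulrN mulVf ?gt_eqF // /=; lra.
rewrite /= add0r mulr_ge0 //; first exact: ltW mu_inv_gt0.
by case: hgen => h _; apply: h.
Qed.

Lemma nnPsi : nn Psi. Proof. by case: hPsi. Qed.

Lemma VE : V = drsubmx P + dlsubmx P *m Psi.
Proof. by rewrite /Vmu /Umx drP dlP; mxr. Qed.

Lemma nnV : nn V.
Proof.
rewrite VE; apply: nnD; first exact: nn_dr nnP.
by apply: nnM; [exact: nn_dl nnP| exact: nnPsi].
Qed.

Definition Qf (Y : 'M[R]_(p, m)) :=
  ursubmx P + ulsubmx P *m Y + Y *m (drsubmx P + dlsubmx P *m Y).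

Lemma ric_id Y : Qf Y = Y + Y + mu^-1 *: (ursubmx T + Y *m drsubmx T + ulsubmx T *m Y
   + Y *m dlsubmx T *m Y).
Proof. by rewrite /Qf urP ulP drP dlP; mxr. Qed.

Lemma ricP Y : riccati T Y <-> Qf Y = Y + Y.
Proof.
rewrite ric_id /riccati; split => [->|]; first by rewrite scaler0 addr0.
move=> /(congr1 (fun M => M - (Y + Y))); rewrite addrC addKr subrr => /eqP.
by rewrite scaler_eq0 invr_eq0 gt_eqF //= => /eqP.
Qed.

Lemma QPsi : Qf Psi = Psi + Psi.
Proof. by apply/ricP; case: hPsi. Qed.

Definition Gs := block_mx (0 : 'M[R]_(p, p)) Psi 0 V.

Lemma nnGs : nn Gs.
Proof. by apply: nn_block; [exact: nn0|exact: nnPsi|exact: nn0|exact: nnV]. Qed.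


Definition Kmat : 'M[R]_p := 1%:M - mu^-1 *: ulsubmx T.

Lemma K_off i j : i != j -> Kmat i j <= 0.
Proof.
move=> ne; rewrite !mxE (negbTE ne) /= sub0r oppr_le0 mulr_ge0 //; first exact: ltW mu_inv_gt0.
by case: hgen => h _; apply: h; rewrite (inj_eq (@lshift_inj p m)).
Qed.

Lemma K_row i : 0 < \sum_j Kmat i j.
Proof.
have hs := (proj2 hgen) (lshift m i); rewrite big_split_ord /= in hs.
have h2 : 0 <= \sum_(j < m) T (lshift m i) (rshift p j).
  by apply: sumr_ge0 => j _; case: hgen => h _; apply: h; rewrite eq_lrshift.
have h1 : \sum_(j < p) ((i == j)%:R : R) = 1.
  by rewrite (bigD1 i) //= eqxx big1 ?addr0 // => j /negbTE; rewrite eq_sym => ->.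
under eq_bigr do rewrite !mxE.
rewrite sumrB h1 -mulr_sumr.
have : mu^-1 * (\sum_(j < p) T (lshift m i) (lshift m j)) <= 0.
  by rewrite pmulr_rle0 ?mu_inv_gt0 //; lra.
lra.
Qed.

Lemma K_unit : Kmat \in unitmx.
Proof.
rewrite unitmxE unitfE -det_tr; apply/negP => /det0P [v vn0 hv].
have hx : Kmat *m v^T = 0 by rewrite -[Kmat]trmxK -trmx_mul hv trmx0.
have h1 : nn v^T by apply: minprin K_off K_row _; rewrite hx; exact: nn0.
have h2 : nn (- v^T) by apply: minprin K_off K_row _; rewrite mulmxN hx oppr0; exact: nn0.
move/negP: vn0; apply; apply/eqP/matrixP => i j.
by have := h1 j i; have := h2 j i; rewrite !mxE; lra.
Qed.

Lemma MinvE : Minv T mu = invmx Kmat. Proof. by []. Qed.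

Lemma nnMinv : nn (Minv T mu).
Proof.
move=> i j; set x := \col_l (invmx Kmat) l j.
have : nn x.
  apply: minprin K_off K_row _ => a b.
  have -> : (Kmat *m x) a b = (1%:M : 'M[R]_p) a j.
    rewrite -(mulmxV K_unit) !mxE; apply: eq_bigr => l _; congr (_ * _); rewrite /x mxE; done.
  by rewrite !mxE; case: (_ == _).
by move=> /(_ i 0); rewrite mxE.
Qed.


Ltac blk := rewrite -?scalemxAl !mulmx_block ?scale_block_mx !add_block_mx; congr block_mx; mxr.

Lemma Fq2_blk (Y : 'M[R]_(p, m)) (Z : 'M[R]_m) :
  Fq (Bp_m1 T mu) (Bp_0 T mu) (Bp_1 R p m) (block_mx 0 Y 0 Z) =
  block_mx 0 (2^-1 *: (ursubmx P + ulsubmx P *m Y + Y *m Z)) 0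
     (2^-1 *: (drsubmx P + dlsubmx P *m Y + Z)).
Proof. rewrite /Fq /Bp_m1 /Bp_0 /Bp_1; blk. Qed.

Lemma Fq1_blk (Y : 'M[R]_(p, m)) (Z : 'M[R]_m) :
  Fq (Theta_m1 T mu) (Theta_0 T mu) (Theta_1 R p m) (block_mx 0 Y 0 Z) =
  block_mx 0 (2^-1 *: (ursubmx P + ulsubmx P *m Y + Y *m Z)) 0
     (drsubmx P + dlsubmx P *m Y).
Proof. rewrite /Fq /Theta_m1 /Theta_0 /Theta_1; blk. Qed.

Lemma Fq3_blk (Y : 'M[R]_(p, m)) (Z : 'M[R]_m) :
  Fq (B_m1 T Psi mu) (B_0 R p m) (B_1 T mu) (block_mx 0 Y 0 Z) =
  block_mx 0 (Minv T mu *m (ursubmx P + Y *m Z)) 0 V.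
Proof. rewrite /Fq /B_m1 /B_0 /B_1 mul0mx addr0; blk. Qed.


Lemma shape (G : 'M[R]_(p + m)) : nn G -> mle G Gs ->
  G = block_mx 0 (ursubmx G) 0 (drsubmx G) /\ mle (ursubmx G) Psi.
Proof.
move=> hn hle; split; last first.
  move=> i j; have := hle (lshift m i) (rshift p j); rewrite /Gs block_mxEur !mxE. by [].
rewrite -{1}[G]submxK; congr block_mx; apply/matrixP => i j; apply/le_anti;
  rewrite !mxE; apply/andP; split.
- by have := hle (lshift m i) (lshift m j); rewrite /Gs block_mxEul mxE.
- exact: hn.
- by have := hle (rshift p i) (lshift m j); rewrite /Gs block_mxEdl mxE.
- exact: hn.
Qed.

Lemma gen_fix (Lm L0 Lp : 'M[R]_(p + m)) : nn Lm -> nn L0 -> nn Lp ->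
  Fq Lm L0 Lp Gs = Gs ->
  [/\ nn (Gmatrix Lm L0 Lp), mle (Gmatrix Lm L0 Lp) Gs,
      Fq Lm L0 Lp (Gmatrix Lm L0 Lp) = Gmatrix Lm L0 Lp &
      forall X, nn X -> mle (Fq Lm L0 Lp X) X -> mle (Gmatrix Lm L0 Lp) X].
Proof.
move=> h1 h2 h3 hGs.
have hsup : mle (Fq Lm L0 Lp Gs) Gs by rewrite hGs; exact: mle_refl.
split.
- exact: (nnG h1 h2 h3 nnGs hsup).
- exact: (G_min h1 h2 h3 nnGs hsup nnGs hsup).
- exact: (G_fix h1 h2 h3 nnGs hsup).
- by move=> X hX hF; exact: (G_min h1 h2 h3 nnGs hsup hX hF).
Qed.

Lemma key12 (G : 'M[R]_(p + m)) : nn G -> mle G Gs ->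
  drsubmx G = drsubmx P + dlsubmx P *m ursubmx G ->
  ursubmx G = 2^-1 *: (ursubmx P + ulsubmx P *m ursubmx G + ursubmx G *m drsubmx G) ->
  G = Gs.
Proof.
move=> hn hle Zeq Yeq; have [GE hY] := shape hn hle.
have hQ : Qf (ursubmx G) = ursubmx G + ursubmx G.
  rewrite /Qf -Zeq; apply/matrixP => i j; move/matrixP: Yeq => /(_ i j).
  rewrite !mxE => ->; lra.
have ric : riccati T (ursubmx G) by apply/ricP.
have hge := (let: And3 _ _ h := hPsi in h) _ (nn_ur hn) ric.
have YPsi : ursubmx G = Psi by apply/matrixP => i j; apply/le_anti; rewrite hY hge.
by rewrite GE Zeq YPsi -VE.
Qed.

Lemma two_ge0 : 0 <= (2 : R)^-1. Proof. by rewrite invr_ge0 ler0n. Qed.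

Lemma nnQ2 : [/\ nn (Bp_m1 T mu), nn (Bp_0 T mu) & nn (Bp_1 R p m)].
Proof.
split; apply: nnZ two_ge0 _; apply: nn_block;
  try first [exact: nn0|exact: nn1|exact: nn_ul nnP|exact: nn_ur nnP|exact: nn_dl nnP|exact: nn_dr nnP].
Qed.

Lemma nnQ1 : [/\ nn (Theta_m1 T mu), nn (Theta_0 T mu) & nn (Theta_1 R p m)].
Proof.
split; last (apply: nnZ two_ge0 _); apply: nn_block;
  try first [exact: nn0|exact: nn1|exact: nn_dl nnP|exact: nn_dr nnP];
  apply: nnZ two_ge0 _; first [exact: nn_ul nnP|exact: nn_ur nnP].
Qed.

Lemma nnQ3 : [/\ nn (B_m1 T Psi mu), nn (B_0 R p m) & nn (B_1 T mu)].
Proof.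
split; [apply: nn_block|exact: nn0|apply: nn_block];
  try first [exact: nn0|exact: nnV|exact: nnMinv].
by apply: nnM; [exact: nnMinv|exact: nn_ur nnP].
Qed.

Lemma QPsi' : ursubmx P + ulsubmx P *m Psi + Psi *m V = Psi + Psi.
Proof. by rewrite VE -QPsi. Qed.

Lemma hGs2 : Fq (Bp_m1 T mu) (Bp_0 T mu) (Bp_1 R p m) Gs = Gs.
Proof.
  rewrite /Gs Fq2_blk; congr block_mx.
    have := QPsi'; move/matrixP => h; apply/matrixP => i j; move: (h i j); rewrite !mxE; lra.
  rewrite VE; apply/matrixP => i j; rewrite !mxE; lra.
Qed.

Lemma G2E : Gmatrix (Bp_m1 T mu) (Bp_0 T mu) (Bp_1 R p m) = Gs.
Proof.
have [h1 h2 h3] := nnQ2.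
have hGs := hGs2.
have [hn hle hfix _] := gen_fix h1 h2 h3 hGs.
have [GE _] := shape hn hle.
have := hfix; rewrite [in X in X = _]GE [in X in _ = X]GE Fq2_blk => /eq_block_mx [_ hY _ hZ].
apply: key12 => //.
  apply/matrixP => i j; move/matrixP: hZ => /(_ i j); rewrite !mxE; lra.
Qed.

Lemma G1E : Gmatrix (Theta_m1 T mu) (Theta_0 T mu) (Theta_1 R p m) = Gs.
Proof.
have [h1 h2 h3] := nnQ1.
have hGs : Fq (Theta_m1 T mu) (Theta_0 T mu) (Theta_1 R p m) Gs = Gs.
  rewrite /Gs Fq1_blk; congr block_mx; last by rewrite VE.
  have := QPsi'; move/matrixP => h; apply/matrixP => i j; move: (h i j); rewrite !mxE; lra.
have [hn hle hfix _] := gen_fix h1 h2 h3 hGs.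
have [GE _] := shape hn hle.
have := hfix; rewrite [in X in X = _]GE [in X in _ = X]GE Fq1_blk => /eq_block_mx [_ hY _ hZ].
by apply: key12 => //; rewrite {1}hY.
Qed.


Lemma KPsi : ursubmx P + Psi *m V = Kmat *m Psi.
Proof.
have := QPsi'; rewrite ulP /Kmat; mxnorm => /matrixP h.
apply/matrixP => i j; move: (h i j); rewrite !mxE; lra.
Qed.

Lemma G3E : Gmatrix (B_m1 T Psi mu) (B_0 R p m) (B_1 T mu) = Gs.
Proof.
have [h1 h2 h3] := nnQ3.
have hGs : Fq (B_m1 T Psi mu) (B_0 R p m) (B_1 T mu) Gs = Gs.
  rewrite /Gs Fq3_blk KPsi MinvE mulmxA mulVmx ?mul1mx //; exact: K_unit.
have [hn hle hfix _] := gen_fix h1 h2 h3 hGs.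
have [GE hYle] := shape hn hle.
set G := Gmatrix _ _ _ in GE hYle hn hle hfix *.
have := hfix; rewrite [in X in X = _]GE [in X in _ = X]GE Fq3_blk => /eq_block_mx [_ hY _ hZ].
rewrite -hZ in hY.
have KY : Kmat *m ursubmx G = ursubmx P + ursubmx G *m V.
  by rewrite -{1}hY MinvE mulmxA mulmxV ?mul1mx //; exact: K_unit.
have [n1 n2 n3] := nnQ2.
have [_ _ _ hmin2] := gen_fix n1 n2 n3 hGs2.
have hXy : mle (Fq (Bp_m1 T mu) (Bp_0 T mu) (Bp_1 R p m) (block_mx 0 (ursubmx G) 0 V))
                (block_mx 0 (ursubmx G) 0 V).
  rewrite Fq2_blk; apply: mle_block; try exact: mle_refl.
    have e : 2^-1 *: (ursubmx P + ulsubmx P *m ursubmx G + ursubmx G *m V) = ursubmx G.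
      move: KY; rewrite ulP /Kmat; mxnorm => /matrixP h.
      apply/matrixP => i j; move: (h i j); rewrite !mxE; lra.
    by rewrite e; exact: mle_refl.
  move=> i j; have := mleMl (nn_dl nnP) hYle i j; rewrite VE !mxE; lra.
have hnX : nn (block_mx (0 : 'M[R]_(p, p)) (ursubmx G) 0 V) by apply: nn_block; [exact: nn0|exact: nn_ur hn|exact: nn0|exact: nnV].
have := hmin2 _ hnX hXy; rewrite G2E => hG.
have YPsi : ursubmx G = Psi.
  apply/matrixP => i j; apply/le_anti; rewrite hYle /=.
  by have := hG (lshift m i) (rshift p j); rewrite /Gs !block_mxEur.
by rewrite GE YPsi -hZ.
Qed.

End App.

Local Close Scope classical_set_scope.
Unset Implicit Arguments.

Theorem theorem4 (R : realType) (p m : nat) (T : 'M[R]_(p + m))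
    (Psi : 'M[R]_(p, m)) (mu : R) :
  (0 < p)%N -> (0 < m)%N ->
  is_generator T ->
  is_min_nonneg_sol T Psi ->
  0 < mu -> (forall i, `|T i i| <= mu) ->
  Gmatrix (Bp_m1 T mu) (Bp_0 T mu) (Bp_1 R p m)
    = Gmatrix (Theta_m1 T mu) (Theta_0 T mu) (Theta_1 R p m)
  /\
  Gmatrix (Bp_m1 T mu) (Bp_0 T mu) (Bp_1 R p m)
    = Gmatrix (B_m1 T Psi mu) (B_0 R p m) (B_1 T mu).
Proof.
move=> _ _ hgen hPsi mu0 hmu.
by split; rewrite (G2E hgen hPsi mu0 hmu) ?(G1E hgen hPsi mu0 hmu) ?(G3E hgen hPsi mu0 hmu).
Qed.
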